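(* Let $Y$ be a set, $\Lambda$ an index set, and for $\ell\in\Lambda$ let $\rho_\ell:Y\to Y_\ell$ be surjective onto a finite set, with a probability density $\nu_\ell>0$ on $Y_\ell$ and an orthonormal basis $\mathcal{B}_\ell$ of $L^2(Y_\ell,\nu_\ell)$ (inner product $\langle f,g\rangle=\sum_y\nu_\ell(y)f(y)\overline{g(y)}$) containing the constant function $1$, $\mathcal{B}_\ell^*=\mathcal{B}_\ell\setminus\{1\}$. Let $(X,\mu)$ be a measure space with $\mu(X)<\infty$ and $F:X\to Y$ with all sets $\{\rho_\ell(F_x)=y\}$ measurable. Let $\mathcal{L}^*\subset\Lambda$ be finite and let $\Delta$ be the smallest non-negative real number such that $\sum_{\ell\in\mathcal{L}^*}\sum_{\varphi\in\mathcal{B}_\ell^*}|\int_X\alpha(x)\varphi(\rho_\ell(F_x))d\mu(x)|^2\leq\Delta\int_X|\alpha|^2d\mu$ for all square-integrable $\alpha:X\to\mathbf{C}$. Then for any subsets $\Omega_\ell\subset Y_\ell$ ($\ell\in\mathcal{L}^*$), $$\int_X\big(P(x,\mathcal{L})-P(\mathcal{L})\big)^2\,d\mu(x)\leq\Delta\,Q(\mathcal{L}),$$ where $P(x,\mathcal{L})=|\{\ell\in\mathcal{L}^*\mid \rho_\ell(F_x)\in\Omega_\ell\}|$, $P(\mathcal{L})=\sum_{\ell\in\mathcal{L}^*}\nu_\ell(\Omega_\ell)$ and $Q(\mathcal{L})=\sum_{\ell\in\mathcal{L}^*}\nu_\ell(\Omega_\ell)(1-\nu_\ell(\Omega_\ell))$,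 with $\nu_\ell(\Omega_\ell)=\sum_{y\in\Omega_\ell}\nu_\ell(y)$. *)

(* Defs.v *)
From HB Require Import structures.
From mathcomp Require Import all_boot all_order all_algebra.
From mathcomp Require Import all_classical all_reals all_analysis.
From mathcomp Require Import complex.
Set Implicit Arguments. Unset Strict Implicit. Unset Printing Implicit Defensive.
Import Order.TTheory GRing.Theory Num.Theory.
Local Open Scope ring_scope.

Section LargeSieveDefs.
Variable R : realType.
Local Notation C := (complex R).

Definition normsq (z : C) : R := complex.Re z ^+ 2 + complex.Im z ^+ 2.

Definition ipL2 (Y : finType) (nu : Y -> R) (f g : Y -> C) : C :=
  \sum_(y : Y) (nu y)%:C%C * f y * conjc (g y).

Definition orthonormal_basis (Y : finType) (nu : Y -> R)
    (B : seq {ffun Y -> C}) : Prop :=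
  (forall i j, (i < size B)%N -> (j < size B)%N ->
     ipL2 nu (nth 0 B i) (nth 0 B j) = (i == j)%:R) /\
  (forall f : Y -> C, exists c : nat -> C,
     forall y, f y = \sum_(i < size B) c i * nth 0 B i y).

Definition unit_fun (Y : finType) : {ffun Y -> C} := [ffun => 1].

Definition Bstar (Y : finType) (B : seq {ffun Y -> C}) : seq {ffun Y -> C} :=
  [seq b <- B | b != unit_fun Y].

Variables (d : measure_display) (X : measurableType d)
  (mu : {measure set X -> \bar R}).

Definition cint (f : X -> C) : C :=
  Complex (Rintegral mu setT (fun x => complex.Re (f x)))
          (Rintegral mu setT (fun x => complex.Im (f x))).

Definition sq_integrable (alpha : X -> C) : Prop :=
  [/\ measurable_fun setT (fun x => complex.Re (alpha x)),
      measurable_fun setT (fun x => complex.Im (alpha x)) &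
      mu.-integrable setT (fun x => (normsq (alpha x))%:E)].

End LargeSieveDefs.

(* Main.v *)
Require Import Defs.
From HB Require Import structures.
From mathcomp Require Import all_boot all_order all_algebra.
From mathcomp Require Import all_classical all_reals all_analysis.
From mathcomp Require Import complex.
From mathcomp Require Import ring lra.
Import Order.TTheory GRing.Theory Num.Theory.
Local Open Scope ring_scope.
Local Open Scope complex_scope.

Section CplxLemmas.
Variable R : realType.
Implicit Types (x y : R[i]).

Lemma ReD x y : complex.Re (x + y) = complex.Re x + complex.Re y. Proof. by case: x => a b; case: y => c d. Qed.
Lemma ImD x y : complex.Im (x + y) = complex.Im x + complex.Im y. Proof. by case: x => a b; case: y => c d. Qed.
Lemma ReM x y : complex.Re (x * y) = complex.Re x * complex.Re y - complex.Im x * complex.Im y. Proof. by case: x => a b; case: y => c d. Qed.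
Lemma ImM x y : complex.Im (x * y) = complex.Re x * complex.Im y + complex.Im x * complex.Re y. Proof. by case: x => a b; case: y => c d /=. Qed.
Lemma Re_sum (I : Type) (s : seq I) (f : I -> R[i]) :
  complex.Re (\sum_(i <- s) f i) = \sum_(i <- s) complex.Re (f i).
Proof. elim: s => [|a s IH]; first by rewrite !big_nil. by rewrite !big_cons ReD IH. Qed.
Lemma Im_sum (I : Type) (s : seq I) (f : I -> R[i]) :
  complex.Im (\sum_(i <- s) f i) = \sum_(i <- s) complex.Im (f i).
Proof. elim: s => [|a s IH]; first by rewrite !big_nil. by rewrite !big_cons ImD IH. Qed.
Lemma ReC (a : R) : complex.Re (a%:C) = a. Proof. by []. Qed.
Lemma ImC (a : R) : complex.Im (a%:C) = 0. Proof. by []. Qed.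
Lemma mulJ_normsq x : x * conjc x = (normsq x)%:C.
Proof. case: x => a b; rewrite /normsq /=; simpc. apply/eqP; rewrite eq_complex /= !expr2. apply/andP; split; apply/eqP; ring. Qed.
Lemma real_complexM (a b : R) : (a * b)%:C = a%:C * b%:C.
Proof. apply/eqP; rewrite eq_complex /=; apply/andP; split; apply/eqP; ring. Qed.
Lemma conjR (a : R) : conjc (a%:C) = a%:C.
Proof. by apply/eqP; rewrite eq_complex /= oppr0 !eqxx. Qed.
Lemma conjD x y : conjc (x + y) = conjc x + conjc y.
Proof. case: x => a b; case: y => c d; apply/eqP; rewrite eq_complex /= opprD !eqxx. by []. Qed.
Lemma conjM x y : conjc (x * y) = conjc x * conjc y.
Proof. case: x => a b; case: y => c d; apply/eqP; rewrite eq_complex /=; apply/andP; split; apply/eqP; ring. Qed.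
Lemma conjK x : conjc (conjc x) = x.
Proof. case: x => a b; by rewrite /= opprK. Qed.
Lemma conj_sum (I : Type) (s : seq I) (f : I -> R[i]) :
  conjc (\sum_(i <- s) f i) = \sum_(i <- s) conjc (f i).
Proof. elim: s => [|a s IH]; first by rewrite !big_nil /= oppr0. rewrite !big_cons conjD; congr (_ + _); exact: IH. Qed.
Lemma real_sum (I : Type) (s : seq I) (f : I -> R) :
  (\sum_(i <- s) f i)%:C = \sum_(i <- s) (f i)%:C.
Proof. elim: s => [|a s IH]; first by rewrite !big_nil. rewrite !big_cons -IH.
by apply/eqP; rewrite eq_complex /= addr0 !eqxx. Qed.
Lemma ReMl (a : R) x : complex.Re (a%:C * x) = a * complex.Re x.
Proof. by rewrite ReM /= mul0r subr0. Qed.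
Lemma ImMl (a : R) x : complex.Im (a%:C * x) = a * complex.Im x.
Proof. by rewrite ImM /= mul0r addr0. Qed.
Lemma normsqR (a : R) : normsq (a%:C) = a ^+ 2.
Proof. by rewrite /normsq /= expr0n /= addr0. Qed.
Lemma realD (a b : R) : (a + b)%:C = a%:C + b%:C.
Proof. by apply/eqP; rewrite eq_complex /= addr0 !eqxx. Qed.
Lemma realB (a b : R) : (a - b)%:C = a%:C - b%:C.
Proof. by apply/eqP; rewrite eq_complex /= subr0 !eqxx. Qed.
Lemma count_natr (T : Type) (p : pred T) (s : seq T) :
  (count p s)%:R = \sum_(l <- s) ((p l)%:R : R).
Proof. elim: s => [|a s IH]; first by rewrite big_nil. by rewrite big_cons /= natrD IH. Qed.
Lemma key_ineq (t : R) x y :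
  2 * t * complex.Re (x * y) <= t ^+ 2 * normsq x + normsq y.
Proof.
case: x => a b; case: y => e f; rewrite /normsq /= -subr_ge0.
have -> : t ^+ 2 * (a ^+ 2 + b ^+ 2) + (e ^+ 2 + f ^+ 2) - 2 * t * (a * e - b * f)
  = (t * a - e) ^+ 2 + (t * b + f) ^+ 2 by ring.
by rewrite addr_ge0 // sqr_ge0.
Qed.
End CplxLemmas.

Section ONB.
Variables (R : realType) (Yt : finType) (nu : Yt -> R) (B : seq {ffun Yt -> R[i]}).
Hypothesis HB : orthonormal_basis nu B.

Lemma ip_suml n (a : 'I_n -> R[i]) (f : 'I_n -> Yt -> R[i]) (g : Yt -> R[i]) :
  ipL2 nu (fun y => \sum_(i < n) a i * f i y) g = \sum_(i < n) a i * ipL2 nu (f i) g.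
Proof.
rewrite /ipL2.
under eq_bigr => y _ do rewrite mulr_sumr mulr_suml.
rewrite exchange_big /=; apply: eq_bigr => i _.
rewrite mulr_sumr; apply: eq_bigr => y _; ring.
Qed.

Lemma ip_conj (f g : Yt -> R[i]) : ipL2 nu g f = conjc (ipL2 nu f g).
Proof.
rewrite /ipL2 conj_sum; apply: eq_bigr => y _.
by rewrite /= !conjM conjR conjK; ring.
Qed.

Lemma B_uniq : uniq B.
Proof.
case: HB => Hon _.
apply/(uniqP 0) => i j Hi Hj Heq.
have := Hon i j Hi Hj; rewrite Heq (Hon j j Hj Hj) eqxx.
case: (i =P j) => // _ /eqP; rewrite /= ?mulr1n ?mulr0n => /eqP /(congr1 (@complex.Re _)) /= /eqP; by rewrite oner_eq0.
Qed.

Lemma coefE (g : Yt -> R[i]) (c : nat -> R[i]) :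
  (forall y, g y = \sum_(i < size B) c i * nth 0 B i y) ->
  forall j, (j < size B)%N -> ipL2 nu g (nth 0 B j) = c j.
Proof.
case: HB => Hon _ Hc j Hj.
rewrite (_ : g = fun y => \sum_(i < size B) c i * nth 0 B i y); last exact: funext.
rewrite (@ip_suml (size B) (fun i : 'I_(size B) => c i) (fun i y => (nth 0 B i) y)).
under eq_bigr => i _ do rewrite (Hon i j (ltn_ord i) Hj).
rewrite (bigD1 (Ordinal Hj)) //= eqxx big1 ?addr0 ?mulr1 //.
move=> i /eqP Hne; rewrite (_ : (i == j :> nat) = false) ?mulr0 //.
by apply/negbTE/eqP => E; apply: Hne; apply: val_inj.
Qed.

Lemma expand (g : Yt -> R[i]) y : g y = \sum_(b <- B) ipL2 nu g b * b y.
Proof.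
case: HB => _ /(_ g) [c Hc].
rewrite Hc (big_nth 0) big_mkord; apply: eq_bigr => i _.
by rewrite (@coefE g c Hc i (ltn_ord i)).
Qed.

Lemma parseval (g : Yt -> R[i]) :
  ipL2 nu g g = \sum_(b <- B) ipL2 nu g b * conjc (ipL2 nu g b).
Proof.
case: HB => _ /(_ g) [c Hc].
have Hc' := @coefE g c Hc.
rewrite {1}(_ : g = fun y => \sum_(i < size B) c i * nth 0 B i y); last exact: funext.
rewrite (@ip_suml (size B) (fun i : 'I_(size B) => c i) (fun i y => (nth 0 B i) y)) (big_nth 0) big_mkord.
apply: eq_bigr => i _; rewrite (Hc' i (ltn_ord i)) ip_conj (Hc' i (ltn_ord i)).
by [].
Qed.

Lemma split_one (V : nmodType) (F : {ffun Yt -> R[i]} -> V) : unit_fun R Yt \in B ->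
  \sum_(b <- B) F b = F (unit_fun R Yt) + \sum_(b <- Bstar B) F b.
Proof.
move=> H1; rewrite (bigD1_seq _ H1 B_uniq) /= /Bstar big_filter.
by [].
Qed.
End ONB.

Section Good.
Local Open Scope classical_set_scope.
Set Implicit Arguments. Unset Strict Implicit.
Variables (R : realType) (d : measure_display) (X : measurableType d)
  (mu : {measure set X -> \bar R}).
Hypothesis mu_fin : (mu setT < +oo)%E.

Definition good (f : X -> R) := measurable_fun setT f /\ exists M, forall x, `|f x| <= M.

Lemma good_cst (r : R) : good (fun _ => r).
Proof. split; first exact: measurable_cst. by exists `|r|. Qed.

Lemma good_add f g : good f -> good g -> good (fun x => f x + g x).
Proof.
move=> [mf [M HM]] [mg [N HN]]; split; first exact: measurable_realfun.measurable_funD.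
exists (M + N) => x; apply: le_trans (ler_normD _ _) _; exact: lerD.
Qed.

Lemma good_mul f g : good f -> good g -> good (fun x => f x * g x).
Proof.
move=> [mf [M HM]] [mg [N HN]]; split; first exact: measurable_realfun.measurable_funM.
exists (M * N) => x; rewrite normrM; apply: ler_pM => //.
Qed.

Lemma good_opp f : good f -> good (fun x => - f x).
Proof.
move=> gf; rewrite (_ : (fun x => - f x) = fun x => (-1) * f x).
  exact: good_mul (good_cst _) gf.
by apply: funext => x; rewrite mulN1r.
Qed.

Lemma good_sub f g : good f -> good g -> good (fun x => f x - g x).
Proof. by move=> gf gg; apply: good_add gf (good_opp gg). Qed.

Lemma good_sqr f : good f -> good (fun x => f x ^+ 2).
Proof.
move=> gf; rewrite (_ : (fun x => f x ^+ 2) = fun x => f x * f x).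
  exact: good_mul.
by apply: funext => x; rewrite expr2.
Qed.

Lemma good_sum (I : Type) (s : seq I) (f : I -> X -> R) :
  (forall i, good (f i)) -> good (fun x => \sum_(i <- s) f i x).
Proof.
move=> H; elim: s => [|a s IH].
  by under eq_fun => x do rewrite big_nil; exact: good_cst.
by under eq_fun => x do rewrite big_cons; exact: good_add.
Qed.

Lemma good_integrable f : good f -> mu.-integrable setT (EFin \o f).
Proof.
move=> [mf [M HM]]; apply: measurable_bounded_integrable => //.
rewrite /bounded_near; near=> K; move=> x _ /=; apply: le_trans (HM x) _.
near: K; apply: nbhs_pinfty_ge; exact: num_real.
Unshelve. all: by end_near.
Qed.

Lemma good_int f : good f -> (\int[mu]_x (f x)%:E)%E = (Rintegral mu setT f)%:E.
Proof.
move=> gf; rewrite /Rintegral fineK //; exact: (integrable_fin_num measurableT (good_integrable gf)).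
Qed.

Lemma Rint_sum (I : Type) (s : seq I) (f : I -> X -> R) :
  (forall i, good (f i)) ->
  Rintegral mu setT (fun x => \sum_(i <- s) f i x) = \sum_(i <- s) Rintegral mu setT (f i).
Proof.
move=> H; elim: s => [|a s IH].
  under eq_fun => x do rewrite big_nil. by rewrite big_nil /Rintegral integral0.
under eq_fun => x do rewrite big_cons.
rewrite big_cons RintegralD //; first by rewrite IH.
  exact: good_integrable.
exact/good_integrable/good_sum.
Qed.

Lemma good_fin (T : finType) (k : X -> T) (g : T -> R) :
  (forall t, measurable [set x | k x = t]) -> good (fun x => g (k x)).
Proof.
move=> Hk; split.
  have -> : (fun x => g (k x)) = fun x => \sum_(t : T) g t * \1_[set x | k x = t] x.
    apply: funext => x; rewrite (bigD1 (k x)) //= big1.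
      by rewrite indicE mem_set // mulr1 addr0.
    by move=> t /eqP Ht; rewrite indicE memNset ?mulr0 //= => E; apply: Ht.
  apply: measurable_sum => t; apply: measurable_realfun.measurable_funM; first exact: measurable_cst.
  exact: measurable_realfun.measurable_indic.
exists (\sum_t `|g t|) => x; rewrite (bigD1 (k x)) //= lerDl sumr_ge0 //.
Qed.
End Good.

Section Ind.
Variables (R : realType) (Yt : finType) (nu : Yt -> R) (B : seq {ffun Yt -> R[i]}).
Hypothesis HB : orthonormal_basis nu B.
Hypothesis H1 : unit_fun R Yt \in B.
Variable Om : {set Yt}.
Let ind := fun y : Yt => (((y \in Om)%:R : R)%:C).
Let nuO := \sum_(y in Om) nu y.

Lemma nuO_E : nuO = \sum_y nu y * (y \in Om)%:R.
Proof. rewrite /nuO big_mkcond; apply: eq_bigr => y _; by case: (y \in Om); rewrite ?mulr1 ?mulr0. Qed.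

Lemma ip_ind_one : ipL2 nu ind (unit_fun R Yt) = nuO%:C.
Proof.
rewrite nuO_E real_sum /ipL2; apply: eq_bigr => y _.
by rewrite ffunE conjR real_complexM mulr1.
Qed.

Lemma ip_ind_ind : ipL2 nu ind ind = nuO%:C.
Proof.
rewrite nuO_E real_sum /ipL2; apply: eq_bigr => y _.
rewrite /ind conjR -!real_complexM; congr (_ %:C).
by case: (y \in Om); rewrite ?mulr1 ?mulr0.
Qed.

Lemma E1 y : ind y = nuO%:C + \sum_(b <- Bstar B) ipL2 nu ind b * b y.
Proof.
rewrite {1}(@expand _ _ _ _ HB ind y) (@split_one _ _ _ _ HB _ (fun b => ipL2 nu ind b * b y) H1).
by rewrite ip_ind_one ffunE mulr1.
Qed.

Lemma E2 : \sum_(b <- Bstar B) normsq (ipL2 nu ind b) = nuO * (1 - nuO).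
Proof.
have := @parseval _ _ _ _ HB ind.
under eq_bigr => b _ do rewrite mulJ_normsq.
rewrite -real_sum ip_ind_ind => /complexI.
rewrite (@split_one _ _ _ _ HB _ (fun b => normsq (ipL2 nu ind b)) H1) ip_ind_one normsqR => E.
by apply: (addrI (nuO ^+ 2)); rewrite -E; ring.
Qed.
End Ind.

Theorem proposition3p1
  (R : realType) (Y : Type) (Lambda : eqType) (Yl : Lambda -> finType)
  (rho : forall l, Y -> Yl l)
  (rho_surj : forall l (z : Yl l), exists y, rho l y = z)
  (nu : forall l, Yl l -> R)
  (nu_pos : forall l (y : Yl l), 0 < nu l y)
  (nu_prob : forall l, \sum_(y : Yl l) nu l y = 1)
  (B : forall l, seq {ffun Yl l -> complex R})
  (B_onb : forall l, orthonormal_basis (nu l) (B l))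
  (B_one : forall l, unit_fun R (Yl l) \in B l)
  (d : measure_display) (X : measurableType d)
  (mu : {measure set X -> \bar R})
  (mu_fin : (mu setT < +oo)%E)
  (F : X -> Y)
  (F_meas : forall l (y : Yl l), measurable [set x | rho l (F x) = y])
  (Lstar : seq Lambda) (Lstar_uniq : uniq Lstar)
  (Delta : R)
  (Delta_ok : 0 <= Delta /\
     forall alpha : X -> complex R, sq_integrable mu alpha ->
       ((\sum_(l <- Lstar) \sum_(phi <- Bstar (B l))
           normsq (cint mu (fun x => alpha x * phi (rho l (F x)))))%:E
        <= Delta%:E * \int[mu]_x (normsq (alpha x))%:E)%E)
  (Delta_min : forall D : R, 0 <= D ->
     (forall alpha : X -> complex R, sq_integrable mu alpha ->
       ((\sum_(l <- Lstar) \sum_(phi <- Bstar (B l))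
           normsq (cint mu (fun x => alpha x * phi (rho l (F x)))))%:E
        <= D%:E * \int[mu]_x (normsq (alpha x))%:E)%E) ->
     Delta <= D)
  (Omega : forall l, {set Yl l}) :
  let nuO := fun l => \sum_(y in Omega l) nu l y in
  let Px := fun x => (count (fun l => rho l (F x) \in Omega l) Lstar)%:R : R in
  let P := \sum_(l <- Lstar) nuO l in
  let Q := \sum_(l <- Lstar) nuO l * (1 - nuO l) in
  (\int[mu]_x ((Px x - P) ^+ 2)%:E <= (Delta * Q)%:E)%E.
Proof.
pose nuO := fun l => \sum_(y in Omega l) nu l y.
pose Px := fun x => (count (fun l => rho l (F x) \in Omega l) Lstar)%:R : R.
pose P := \sum_(l <- Lstar) nuO l.
pose Q := \sum_(l <- Lstar) nuO l * (1 - nuO l).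
change ((\int[mu]_x ((Px x - P) ^+ 2)%:E <= (Delta * Q)%:E)%E).
case: Delta_ok => D0 Dok.
pose c l (b : {ffun Yl l -> complex R}) :=
  ipL2 (nu l) (fun y => (((y \in Omega l)%:R : R)%:C)) b.
pose alpha x := Px x - P.
pose al x := (alpha x)%:C.
pose I l (b : {ffun Yl l -> complex R}) := cint mu (fun x => al x * b (rho l (F x))).
have mu_fin' := mu_fin.
have alpha_E : forall x, alpha x =
    \sum_(l <- Lstar) (((rho l (F x) \in Omega l)%:R : R) - nuO l).
  by move=> x; rewrite /alpha /Px count_natr /P sumrB.
have galpha : good alpha.
  rewrite (_ : alpha = fun x => \sum_(l <- Lstar)
       (((rho l (F x) \in Omega l)%:R : R) - nuO l)); last exact: funext.
  apply: good_sum => l; apply: good_sub; last exact: good_cst.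
  exact: (@good_fin _ _ _ _ (fun x => rho l (F x)) (fun y => ((y \in Omega l)%:R : R)) (F_meas l)).
have gRe : forall l (b : {ffun Yl l -> complex R}),
    good (fun x => complex.Re (b (rho l (F x)))).
  move=> l b; exact: (@good_fin _ _ _ _ (fun x => rho l (F x)) (fun y => complex.Re (b y)) (F_meas l)).
have gIm : forall l (b : {ffun Yl l -> complex R}),
    good (fun x => complex.Im (b (rho l (F x)))).
  move=> l b; exact: (@good_fin _ _ _ _ (fun x => rho l (F x)) (fun y => complex.Im (b y)) (F_meas l)).
have alC : forall x, al x =
    \sum_(l <- Lstar) \sum_(b <- Bstar (B l)) c l b * b (rho l (F x)).
  move=> x; rewrite /al alpha_E real_sum; apply: eq_bigr => l _.
  rewrite realB (@E1 _ _ _ _ (B_onb l) (B_one l) (Omega l) (rho l (F x))).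
  by rewrite addrAC subrr add0r.
have pw : forall x, alpha x ^+ 2 = \sum_(l <- Lstar) \sum_(b <- Bstar (B l))
    (complex.Re (c l b) * (alpha x * complex.Re (b (rho l (F x))))
     - complex.Im (c l b) * (alpha x * complex.Im (b (rho l (F x))))).
  move=> x; rewrite expr2 {2}(_ : alpha x = complex.Re (al x)) // alC Re_sum mulr_sumr.
  apply: eq_bigr => l _; rewrite Re_sum mulr_sumr; apply: eq_bigr => b _.
  rewrite ReM; ring.
pose A := Rintegral mu setT (fun x => alpha x ^+ 2).
have ReI : forall l b, complex.Re (I l b) =
    Rintegral mu setT (fun x => alpha x * complex.Re (b (rho l (F x)))).
  move=> l b; rewrite /I /cint /=; congr (Rintegral _ _ _).
  by apply: funext => x; rewrite ReMl.
have ImI : forall l b, complex.Im (I l b) =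
    Rintegral mu setT (fun x => alpha x * complex.Im (b (rho l (F x)))).
  move=> l b; rewrite /I /cint /=; congr (Rintegral _ _ _).
  by apply: funext => x; rewrite ImMl.
have HA : A = \sum_(l <- Lstar) \sum_(b <- Bstar (B l)) complex.Re (c l b * I l b).
  rewrite /A (_ : (fun x => alpha x ^+ 2) = fun x => \sum_(l <- Lstar) \sum_(b <- Bstar (B l))
    (complex.Re (c l b) * (alpha x * complex.Re (b (rho l (F x))))
     - complex.Im (c l b) * (alpha x * complex.Im (b (rho l (F x)))))); last exact: funext.
  rewrite (Rint_sum mu_fin); last first.
    move=> l; apply: good_sum => b; apply: good_sub; apply: good_mul;
      (try exact: good_cst); apply: good_mul => //.
  apply: eq_bigr => l _; rewrite (Rint_sum mu_fin); last first.
    move=> b; apply: good_sub; apply: good_mul;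
      (try exact: good_cst); apply: good_mul => //.
  apply: eq_bigr => b _.
  rewrite RintegralB //; first last.
    - apply: (good_integrable mu_fin); apply: good_mul; first exact: good_cst.
      exact: good_mul.
    - apply: (good_integrable mu_fin); apply: good_mul; first exact: good_cst.
      exact: good_mul.
  rewrite !RintegralZl //; first last.
    - by apply: (good_integrable mu_fin); apply: good_mul.
    - by apply: (good_integrable mu_fin); apply: good_mul.
  by rewrite ReM ReI ImI.
have Hsq : sq_integrable mu al.
  split.
  - exact: galpha.1.
  - exact: measurable_cst.
  - rewrite (_ : (fun x => (normsq (al x))%:E) = EFin \o (fun x => alpha x ^+ 2)).
      exact/(good_integrable mu_fin)/good_sqr.
    by apply: funext => x; rewrite /= normsqR.
have Hint : (\int[mu]_x (normsq (al x))%:E = A%:E)%E.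
  rewrite (_ : (fun x => (normsq (al x))%:E) = (fun x => (alpha x ^+ 2)%:E)).
    exact/(good_int mu_fin)/good_sqr.
  by apply: funext => x; rewrite normsqR.
have HS := Dok al Hsq.
rewrite Hint -EFinM lee_fin in HS.
have key : forall t, 0 < t -> 2 * t * A <= t ^+ 2 * Q + Delta * A.
  move=> t t0; apply: le_trans (lerD (lexx _) HS).
  have -> : t ^+ 2 * Q + \sum_(l <- Lstar) \sum_(phi <- Bstar (B l))
        normsq (cint mu (fun x => al x * phi (rho l (F x)))) =
      \sum_(l <- Lstar) \sum_(b <- Bstar (B l)) (t ^+ 2 * normsq (c l b) + normsq (I l b)).
    rewrite /Q mulr_sumr -big_split; apply: eq_bigr => l _.
    by rewrite -(@E2 _ _ _ _ (B_onb l) (B_one l) (Omega l)) mulr_sumr -big_split.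
  rewrite HA mulr_sumr; apply: ler_sum => l _; rewrite mulr_sumr; apply: ler_sum => b _.
  exact: key_ineq.
have AQ : A <= Delta * Q.
  have [Dp|Dz] := ltrP 0 Delta.
    have := key Delta Dp; nra.
  have D00 : Delta = 0 by apply/le_anti/andP.
  rewrite D00 mul0r.
  have {}key : forall t, 0 < t -> 2 * t * A <= t ^+ 2 * Q.
    by move=> t t0; have := key t t0; rewrite D00 mul0r addr0.
  case: (lerP A 0) => // Apos.
  have := key 1 ltr01; rewrite expr1n mul1r => HQ.
  have Qpos : 0 < Q by nra.
  have := key (A / Q) (divr_gt0 Apos Qpos).
  have -> : (A / Q) ^+ 2 * Q = A / Q * A by rewrite expr2 -mulrA divfK // gt_eqF.
  move=> H; have : 0 < A / Q * A by apply: mulr_gt0 => //; exact: divr_gt0.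
  nra.
have HI : (\int[mu]_x ((Px x - P) ^+ 2)%:E = A%:E)%E.
  exact: (good_int mu_fin (good_sqr galpha)).
by rewrite HI lee_fin.
Qed.
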